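(* Let $\{\mu_t\}_{t\in[0,T]}$ be the limit family from the definition of approximative solutions below, with $\rho_t$ its $x$-marginal and $M$ the uniform velocity bound. Then $\{\mu_t\}$ is locally mass preserving: for every set $C\subset\mathbb{R}^d$ and all $0\le t_0\le t\le T$, $$\rho_t\big(\overline{C}+(t-t_0)\overline{B(M)}\big)\ge\rho_{t_0}(C).$$
   Context: Setting: $T>0$, $\alpha\in[1,2]$, $d\ge1$, $\psi(s)=s^{-\alpha}$; $\overline{S}$ denotes closure and $+$ the Minkowski sum. Particle system: $\dot x_i=v_i$, $\dot v_i=\frac1N\sum_{j\ne i}\psi(|x_i-x_j|)(v_j-v_i)$ (unique smooth non-collisional global solutions for distinct initial positions). Atomic solution: $\mu^N_t=\frac1N\sum_i\delta_{x_i^N(t)}\otimes\delta_{v_i^N(t)}$, $\mu^N=\mu^N_t\otimes\lambda^1(t)$, where $\mu=\mu_t\otimes\lambda^1(t)$ means $\int g\,d\mu=\int_0^T\int g(t,\cdot)d\mu_t\,dt$. $E[\mu_t]=\int|v|^2d\mu_t$. Approximative solutions: given compactly supported $\rho_0\in\mathcal{P}(\mathbb{R}^d)$ and $u_0\in L^\infty(\rho_0;\mathbb{R}^d)$, for each $N$ take initial data $(x_{i0}^N,v_{i0}^N)_{i=1}^N$ with pairwise distinct $x_{i0}^N$ such that $\frac1N\sum_i\delta_{x_{i0}^N}\rightharpoonup\rho_0$ and $\frac1N\sum_iv_{i0}^N\delta_{x_{i0}^N}\rightharpoonup u_0\rho_0$ narrowly, with all $\mu^N_t$ supported in $(T+1)B(M)\times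 B(M)$ for a fixed $M$ (so $|v_i^N(t)|<M$); let $\mu^N$ be the associated atomic solutions, and pass to a subsequence (not relabeled) such that: $\mu^N\rightharpoonup\mu=\mu_t\otimes\lambda^1(t)$ narrowly; $[\mu^N_t\otimes\mu^N_t]\otimes\lambda^1(t)\rightharpoonup[\mu_t\otimes\mu_t]\otimes\lambda^1(t)$ narrowly; $\rho^N_t:=\int_{\mathbb{R}^d_v}d\mu^N_t\to\rho_t$ in $C([0,T];(\mathcal{M}_+(\mathbb{R}^d),d_{BL}))$, where $\rho_t$ is the $x$-marginal of $\mu_t$; and $E[\mu^N_t]\to E[\mu_t]$ for all $t$ in a full-measure set $A_E$. $B(r)$ is the open ball of radius $r$ at $0$ and $d_{BL}$ the bounded-Lipschitz distance. *)

(* Defs.v *)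
From HB Require Import structures.
From mathcomp Require Import all_boot all_order all_algebra.
From mathcomp Require Import all_classical all_reals all_analysis.
From mathcomp Require Import measurable_realfun.
Set Implicit Arguments. Unset Strict Implicit. Unset Printing Implicit Defensive.
Import Order.TTheory GRing.Theory Num.Theory.
Import numFieldNormedType.Exports.
Local Open Scope classical_set_scope.
Local Open Scope ring_scope.

(* Points of R^d are row vectors 'rV[R]_d (library topology = usual one). *)

(* Euclidean norm on R^d (the library norm on 'rV is the max norm). *)
Definition enorm (R : realType) (d : nat) (v : 'rV[R]_d) : R :=
  Num.sqrt (\sum_(k < d) v ord0 k ^+ 2).

Definition eball (R : realType) (d : nat) (r : R) : set 'rV[R]_d :=
  [set v | enorm v < r].

Definition setMsum (R : realType) (d : nat) (A B : set 'rV[R]_d)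
  : set 'rV[R]_d := [set a + b | a in A & b in B].

Definition Rd (R : realType) (d : nat) :=
  g_sigma_algebraType (@open 'rV[R]_d).

Definition Phase (R : realType) (d : nat) := (Rd R d * Rd R d)%type.

(* f : R^d -> R with sup|f| <= 1 and Lip(f) <= 1 (Euclidean distance):
   the test functions in the bounded-Lipschitz distance. *)
Definition BL1 (R : realType) (d : nat) (f : 'rV[R]_d -> R) : Prop :=
  (forall x, `|f x| <= 1) /\
  (forall x y, `|f x - f y| <= enorm (x - y)).

(* d_BL(nu1, nu2) <= e, where nu1 is given through its integral functional. *)
Definition dBL_le (R : realType) (d : nat)
  (I1 : ('rV[R]_d -> R) -> \bar R) (I2 : ('rV[R]_d -> R) -> \bar R) (e : R)
  : Prop :=
  forall f, BL1 f -> (`| I1 f - I2 f | <= e%:E)%E.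

Definition bcont (R : realType) (X : topologicalType) (D : set X) (g : X -> R)
  : Prop :=
  {within D, continuous g} /\ exists C : R, forall p, D p -> `|g p| <= C.

Definition I0T (R : realType) (T : R) : set R := `[0, T].

(* Main.v *)
Require Import Defs.
From HB Require Import structures.
From mathcomp Require Import all_boot all_order all_algebra.
From mathcomp Require Import all_classical all_reals all_analysis.
From mathcomp Require Import measurable_realfun.
From mathcomp Require Import ring lra.
Import Order.TTheory GRing.Theory Num.Theory.
Import numFieldNormedType.Exports.
Local Open Scope classical_set_scope.
Local Open Scope ring_scope.
Set Implicit Arguments. Unset Strict Implicit.

Section Eucl.
Variables (R : realType) (d : nat).
Implicit Types (u w : 'rV[R]_d).

Lemma enorm_ge0 w : 0 <= enorm w.
Proof. exact: sqrtr_ge0. Qed.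

Lemma coord_le_enorm w k : `|w ord0 k| <= enorm w.
Proof.
rewrite /enorm -(sqrtr_sqr (w ord0 k)) ler_sqrt ?sumr_ge0 // => [|i _]; last exact: sqr_ge0.
by rewrite (bigD1 k) //= lerDl sumr_ge0 // => i _; exact: sqr_ge0.
Qed.

Lemma norm_le_enorm w : `|w| <= enorm w.
Proof.
rewrite [leLHS]/Num.Def.normr /= mx_normrE; apply/bigmax_leP; split; first exact: enorm_ge0.
by move=> [i j] _ /=; rewrite ord1; exact: coord_le_enorm.
Qed.

Lemma cauchy_schwarz (a b : 'I_d -> R) :
  \sum_k a k * b k <= Num.sqrt (\sum_k a k ^+ 2) * Num.sqrt (\sum_k b k ^+ 2).
Proof.
set A := \sum_k a k ^+ 2; set B := \sum_k b k ^+ 2.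
have A0 : 0 <= A by apply: sumr_ge0 => k _; exact: sqr_ge0.
have B0 : 0 <= B by apply: sumr_ge0 => k _; exact: sqr_ge0.
have [A0'|Apos] := eqVneq A 0.
  have az : forall k, a k = 0.
    move=> k; apply/eqP; rewrite -sqrf_eq0; apply/eqP.
    by move/eqP: A0'; rewrite psumr_eq0 => [/allP/(_ k (mem_index_enum _))/implyP/(_ isT)/eqP|i _]; [|exact: sqr_ge0].
  by rewrite big1 ?mulr_ge0 ?sqrtr_ge0 // => k _; rewrite az mul0r.
have [B0'|Bpos] := eqVneq B 0.
  have bz : forall k, b k = 0.
    move=> k; apply/eqP; rewrite -sqrf_eq0; apply/eqP.
    by move/eqP: B0'; rewrite psumr_eq0 => [/allP/(_ k (mem_index_enum _))/implyP/(_ isT)/eqP|i _]; [|exact: sqr_ge0].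
  by rewrite big1 ?mulr_ge0 ?sqrtr_ge0 // => k _; rewrite bz mulr0.
set sA := Num.sqrt A; set sB := Num.sqrt B.
have sApos : 0 < sA by rewrite sqrtr_gt0 lt_neqAle eq_sym Apos.
have sBpos : 0 < sB by rewrite sqrtr_gt0 lt_neqAle eq_sym Bpos.
have HA : sA ^+ 2 = A by rewrite sqr_sqrtr.
have HB : sB ^+ 2 = B by rewrite sqr_sqrtr.
have key : 0 <= \sum_k (a k * sB - b k * sA) ^+ 2 by apply: sumr_ge0 => k _; exact: sqr_ge0.
have E : \sum_k (a k * sB - b k * sA) ^+ 2 =
   A * sB ^+ 2 - 2 * sA * sB * (\sum_k a k * b k) + B * sA ^+ 2.
  rewrite /A /B !mulr_suml mulr_sumr -sumrB -big_split /=.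
  by apply: eq_bigr => k _; ring.
rewrite E HA HB in key.
have : 2 * sA * sB * (\sum_k a k * b k) <= 2 * (sA * sB) * (sA * sB).
  rewrite -HA -HB in key; nra.
rewrite -[2 * sA * sB]mulrA => H.
have p : 0 < 2 * (sA * sB) by rewrite mulr_gt0 // mulr_gt0.
by rewrite -(ler_pM2l p).
Qed.

End Eucl.
Section InfF.
Variables (R : realType) (V : normedModType R) (X : Type).
Variables (I : set X) (g : X -> V -> R).
Hypothesis g0 : forall i y, 0 <= g i y.
Hypothesis glip : forall i y z, g i y <= g i z + `|y - z|.
Hypothesis I0 : I !=set0.

Definition infF (y : V) : R := inf [set g i y | i in I].

Lemma infF_ge0 y : 0 <= infF y.
Proof.
apply: lb_le_inf; first by case: I0 => i Ii; exists (g i y), i.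
by move=> _ [i _ <-]; exact: g0.
Qed.

Lemma infF_le i y : I i -> infF y <= g i y.
Proof.
move=> Ii; apply: ge_inf; last by exists i.
by exists 0 => _ [j _ <-]; exact: g0.
Qed.

Lemma infF_lip y z : infF y <= infF z + `|y - z|.
Proof.
suff : infF y - `|y - z| <= infF z by rewrite lerBlDr.
apply: lb_le_inf; first by case: I0 => i Ii; exists (g i z), i.
move=> _ [i Ii <-]; rewrite lerBlDr; apply: le_trans (glip i y z).
exact: infF_le.
Qed.

Lemma infF_abs y z : `|infF y - infF z| <= `|y - z|.
Proof.
have h1 := infF_lip y z; have h2 := infF_lip z y; rewrite distrC in h2.
rewrite ler_norml; apply/andP; split; lra.
Qed.

End InfF.

Section Lip.
Variables (R : realType) (V : normedModType R).

Lemma lip_continuous (f : V -> R) :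
  (forall y z, `|f y - f z| <= `|y - z|) -> continuous f.
Proof.
move=> H z; apply/cvgrPdist_lt => e e0.
near=> y; apply: le_lt_trans (H z y) _; near: y.
by apply: cvgr_dist_lt => //; exact: cvg_id.
Unshelve. all: by end_near.
Qed.

Definition distS (A : set V) (y : V) : R := @infF R V V A (fun a y => `|y - a|) y.

Lemma distS_lipg (a : V) y z : `|y - a| <= `|z - a| + `|y - z|.
Proof.
have E : y - a = (y - z) + (z - a) by rewrite addrA subrK.
by rewrite [leRHS]addrC {1}E ler_normD.
Qed.

Lemma distS_ge0 A y : A !=set0 -> 0 <= distS A y.
Proof. by move=> A0; apply: infF_ge0 => // *; exact: normr_ge0. Qed.

Lemma distS_le A a y : A a -> distS A y <= `|y - a|.
Proof. by move=> Aa; apply: infF_le => // *; exact: normr_ge0. Qed.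

Lemma distS_abs A y z : A !=set0 -> `|distS A y - distS A z| <= `|y - z|.
Proof. move=> A0; apply: infF_abs => //. all: move=> *; first [exact: normr_ge0 | exact: distS_lipg]. Qed.

Lemma distS_closure A y : A !=set0 -> distS A y <= 0 -> closure A y.
Proof.
move=> A0 H B /nbhs_ballP [e e0 sB].
have : inf [set `|y - a| | a in A] < e by apply: le_lt_trans H e0.
case/inf_lt; first by case: A0 => a Aa; exists `|y - a|, a.
move=> _ [a Aa <-] ya; exists a; split => //; apply: sB.
by rewrite -ball_normE /ball_ /=.
Qed.

End Lip.
Section Deriv.
Variables (R : realType) (d : nat).

Definition Lc (c w : 'rV[R]_d) : R := \sum_k c ord0 k * w ord0 k.

Lemma Lc_cont c : continuous (Lc c).
Proof.
have hk : forall k : 'I_d, continuous (fun w : 'rV[R]_d => c ord0 k * w ord0 k).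
  move=> k w0; have hc := @coord_continuous R 1 d ord0 k w0.
  exact: (@cvgMl_tmp _ _ (nbhs w0) _ (fun w : 'rV[R]_d => w ord0 k) (c ord0 k) _ hc).
have ac : continuous (fun x : R * R => x.1 + x.2).
  exact: (@pseudometric_normed_Zmodule.add_continuous R R^o).
move=> w0; rewrite /Lc.
exact: (@cvg_big _ _ +%R 0 _ ac _ (nbhs w0) (index_enum _)
   (fun k w => c ord0 k * w ord0 k) (fun k => c ord0 k * w0 ord0 k) _ (fun k _ => hk k w0)).
Qed.

Lemma LcZB c a w1 w2 : Lc c (a *: (w1 - w2)) = a * (Lc c w1 - Lc c w2).
Proof.
rewrite /Lc mulrBr !mulr_sumr -sumrB; apply: eq_bigr => k _.
by rewrite !mxE; ring.
Qed.

Lemma derive_Lc (f : R -> 'rV[R]_d) (c : 'rV[R]_d) (s : R) (df : 'rV[R]_d) :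
  is_derive s 1 f df -> is_derive s 1 (fun r => Lc c (f r)) (Lc c df).
Proof.
case=> hd hv.
set g := (fun h : R => h^-1 *: ((f \o shift s) (h *: 1) - f s)).
have cv : g @ 0^' --> df by rewrite -hv; exact: hd.
have cv2 : (Lc c \o g) @ 0^' --> Lc c df.
  apply: continuous_cvg; last exact: cv. exact: Lc_cont.
have E : (fun h : R => h^-1 *: (((fun r => Lc c (f r)) \o shift s) (h *: 1) - Lc c (f s)))
   = Lc c \o g.
  by apply: funext => h; rewrite /g /= LcZB.
apply: DeriveDef.
  by rewrite /derivable E; exact: cvgP cv2.
by rewrite /derive E; exact: cvg_lim cv2.
Qed.

End Deriv.

Section Displ.
Variables (R : realType) (d : nat).

Lemma LcB (c w1 w2 : 'rV[R]_d) : Lc c (w1 - w2) = Lc c w1 - Lc c w2.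
Proof. by rewrite -(scale1r (w1 - w2)) LcZB mul1r. Qed.

Lemma Lc_self (w : 'rV[R]_d) : Lc w w = enorm w ^+ 2.
Proof.
rewrite /enorm sqr_sqrtr; last by apply: sumr_ge0 => k _; exact: sqr_ge0.
by apply: eq_bigr => k _; rewrite expr2.
Qed.

Lemma Lc_le (c w : 'rV[R]_d) : Lc c w <= enorm c * enorm w.
Proof. exact: cauchy_schwarz. Qed.

Lemma enorm_eq0 (w : 'rV[R]_d) : enorm w = 0 -> w = 0.
Proof.
move/eqP; rewrite /enorm sqrtr_eq0 => H.
have S0 : \sum_k w ord0 k ^+ 2 = 0.
  by apply/eqP; rewrite eq_le H sumr_ge0 // => k _; exact: sqr_ge0.
apply/rowP => k; rewrite mxE; apply/eqP; rewrite -sqrf_eq0; apply/eqP.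
move/eqP: S0; rewrite psumr_eq0 => [/allP/(_ k (mem_index_enum _))/implyP/(_ isT)/eqP //|i _].
exact: sqr_ge0.
Qed.

Lemma displacement (x v : R -> 'rV[R]_d) (M t0 t : R) :
  {within `[0, +oo[, continuous x} ->
  (forall s : R, 0 < s -> is_derive s 1 x (v s)) ->
  (forall s : R, t0 <= s <= t -> enorm (v s) < M) ->
  0 <= t0 -> t0 < t ->
  enorm (x t - x t0) < (t - t0) * M.
Proof.
move=> xc xd vb t00 tt.
have M0 : 0 < M.
  by apply: le_lt_trans (vb t0 _); [exact: enorm_ge0|rewrite lexx ltW].
set D := x t - x t0.
have [D0|Dn0] := eqVneq D 0.
  have -> : enorm D = 0.
    rewrite D0 /enorm (eq_bigr (fun _ => 0)) ?big1 ?sqrtr0 //.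
    by move=> k _; rewrite mxE expr0n.
  by rewrite mulr_gt0 // subr_gt0.
have eD : 0 < enorm D.
  rewrite lt_neqAle enorm_ge0 andbT; apply/negP => /eqP /esym /enorm_eq0 E.
  by move: Dn0; rewrite E eqxx.
have hd : forall s : R, s \in `]t0, t[ -> is_derive s 1 (fun r => Lc D (x r)) (Lc D (v s)).
  move=> s; rewrite in_itv /= => /andP [s1 s2]; apply: derive_Lc; apply: xd.
  exact: le_lt_trans t00 s1.
have hc : {within `[t0, t], continuous (fun r => Lc D (x r))}.
  have sub : `[t0, t] `<=` `[0, +oo[.
    move=> r; rewrite /= !in_itv /= andbT => /andP [r1 _]; exact: le_trans t00 r1.
  move: (continuous_subspaceW sub xc) => xc'.
  move=> r; apply: continuous_cvg; last exact: xc'.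
  exact: Lc_cont.
have [c /[!in_itv] /= /andP [c1 c2]] := MVT tt hd hc.
rewrite -LcB -/D Lc_self => E.
have vc : enorm (v c) < M by apply: vb; rewrite !ltW.
have : Lc D (v c) < enorm D * M.
  apply: le_lt_trans (Lc_le _ _) _; by rewrite ltr_pM2l.
have tp : 0 < t - t0 by rewrite subr_gt0.
move=> H2.
have : enorm D ^+ 2 < enorm D * M * (t - t0) by rewrite E ltr_pM2r.
rewrite expr2 -mulrA ltr_pM2l // mulrC //.
Qed.

End Displ.

Section Geo.
Variables (R : realType) (d : nat).
Local Notation V := 'rV[R]_d.
Variables (C : set V) (M s : R).
Hypotheses (hM : 0 < M) (hs : 0 <= s) (C0 : C !=set0).

Definition Bset : set V := closure (@eball R d M).
Definition Sset : set V := [set s *: b | b in Bset].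
Definition phi (y : V) : R := @infF R V V Sset (fun b y => distS C (y - b)) y.

Lemma S0 : Sset !=set0.
Proof.
exists 0, 0; last by rewrite scaler0.
apply: subset_closure; rewrite /eball /= /enorm (eq_bigr (fun _ => 0)).
  by rewrite big1 // sqrtr0.
by move=> k _; rewrite mxE expr0n.
Qed.

Lemma phi_g0 b y : 0 <= distS C (y - b).
Proof. exact: distS_ge0. Qed.

Lemma phi_glip b y z : distS C (y - b) <= distS C (z - b) + `|y - z|.
Proof.
have := distS_abs (y - b) (z - b) C0.
rewrite opprB addrA subrK => H.
have := ler_norm (distS C (y - b) - distS C (z - b)); lra.
Qed.

Lemma phi_ge0 y : 0 <= phi y.
Proof. apply: infF_ge0 => //; [exact: phi_g0|exact: S0]. Qed.

Lemma phi_le b y : Sset b -> phi y <= distS C (y - b).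
Proof. by move=> Sb; apply: infF_le => //; exact: phi_g0. Qed.

Lemma phi_abs y z : `|phi y - phi z| <= `|y - z|.
Proof. apply: infF_abs; [exact: phi_g0|exact: phi_glip|exact: S0]. Qed.

Lemma phi_cont : continuous phi.
Proof. apply: lip_continuous; exact: phi_abs. Qed.

Lemma Bset_compact : compact Bset.
Proof.
apply: bounded_closed_compact; last exact: closed_closure.
have sub : Bset `<=` [set v : V | `|v| <= M].
  move=> v Bv.
  have : closed_ball (0 : V) M v.
    rewrite /closed_ball; apply: (closureS _ Bv) => w /= ew.
    rewrite -ball_normE /ball_ /= sub0r normrN.
    exact: le_lt_trans (norm_le_enorm w) ew.
  by rewrite closed_ballE // /closed_ball_ /= sub0r normrN.
suff h : \forall M' \near +oo, forall v, Bset v -> `|v| <= M' by [].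
near=> M'.
move=> v /sub vM; apply: le_trans vM _; near: M'.
apply: nbhs_pinfty_ge; exact: num_real.
Unshelve. all: by end_near.
Qed.

Lemma Sset_compact : compact Sset.
Proof.
apply: continuous_compact; last exact: Bset_compact.
apply: continuous_subspaceT; exact: scaler_continuous.
Qed.

Lemma phi_zero y : phi y <= 0 -> setMsum (closure C) Sset y.
Proof.
move=> py.
have cf : {within Sset, continuous (fun b => distS C (y - b))}.
  apply: continuous_subspaceT; apply: lip_continuous => b1 b2.
  apply: le_trans (distS_abs _ _ C0) _.
  by rewrite opprB addrC addrA subrK distrC.
have [b /[!inE] Sb bmin] := EVT_min_rV S0 Sset_compact cf.
have : distS C (y - b) <= phi y.
  apply: lb_le_inf; first by case: S0 => b' Sb'; exists (distS C (y - b')), b'.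
  by move=> _ [b' Sb' <-]; apply: bmin; rewrite inE.
move=> H; have cl : closure C (y - b) by apply: distS_closure => //; exact: le_trans H py.
by exists (y - b) => //; exists b => //; rewrite subrK.
Qed.

Lemma closure_distS k : closure C k -> distS C k <= 0.
Proof.
move=> ck; rewrite leNgt; apply/negP => pos.
have := ck (ball k (distS C k)); case.
  by apply: nbhsx_ballx.
move=> a [Ca]; rewrite -ball_normE /ball_ /= => ka.
by have := distS_le k Ca; rewrite leNgt ka.
Qed.

Lemma D_phi y : setMsum (closure C) Sset y -> phi y <= 0.
Proof.
case=> k ck [b Sb <-].
apply: le_trans (phi_le _ Sb) _.
rewrite addrK; exact: closure_distS.
Qed.

End Geo.

Section Meas.
Variables (R : realType) (d : nat).
Local Notation V := 'rV[R]_d.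

Lemma open_meas (A : set V) : open A -> measurable (A : set (Rd R d)).
Proof. by move=> oA; apply: sub_sigma_algebra. Qed.

Lemma cont_meas (f : V -> R) : continuous f -> measurable_fun (setT : set (Rd R d)) f.
Proof.
move=> cf; apply: (measurability _ (RGenOpens.measurableE R)).
move=> _ [_ [a [b ->] <-]]; rewrite setTI; apply: open_meas.
by move/continuousP: cf; apply; exact: interval_open.
Qed.

Lemma cont_measE (f : V -> R) (D : set (Rd R d)) : measurable D -> continuous f ->
  measurable_fun D (fun y : Rd R d => (f y)%:E).
Proof.
move=> mD cf; apply/measurable_EFinP.
exact: (measurable_funS measurableT) (cont_meas cf).
Qed.

Lemma int_lb (mu : {measure set (Rd R d) -> \bar R}) (A : set (Rd R d)) (f : V -> R) (e : R) :
  measurable A -> continuous f -> (forall y, 0 <= f y) -> (forall y, A y -> e <= f y) ->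
  0 <= e -> (e%:E * mu A <= \int[mu]_y (f y)%:E)%E.
Proof.
move=> mA cf f0 fA e0.
rewrite -integral_cst //.
apply: (@le_trans _ _ (\int[mu]_(y in A) (f y)%:E)%E).
  apply: ge0_le_integral => //.
  - exact: cont_measE.

apply: ge0_subset_integral => //.
- exact: cont_measE.
- by move=> y Ay; rewrite lee_fin.
Qed.

Lemma int_ub (mu : {measure set (Rd R d) -> \bar R}) (U : set (Rd R d)) (f : V -> R) (e : R) :
  measurable U -> continuous f -> (forall y, 0 <= f y) ->
  (forall y, f y <= e * \1_U y) -> 0 < e ->
  (\int[mu]_y (f y)%:E <= e%:E * mu U)%E.
Proof.
move=> mU cf f0 fU e0.
have mI : measurable_fun (setT : set (Rd R d)) (fun y => (e * \1_U y)%:E).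
  apply/measurable_EFinP; apply: measurable_funM; first exact: measurable_cst.
  exact: measurable_indic.
apply: (@le_trans _ _ (\int[mu]_y (e * \1_U y)%:E)%E).
  apply: ge0_le_integral => //.
  - by move=> y Ay; rewrite lee_fin.
  - exact: cont_measE.
  - by move=> y Ay; rewrite lee_fin.
have H := @integralZl_indic _ _ _ mu setT measurableT (fun=> U) e.
rewrite /= in H; rewrite H //; last by move=> /ltW; rewrite leNgt e0.
by rewrite integral_indic // setIT.
Qed.

End Meas.

Section Small.
Variable R : realType.

Lemma max0_lip (e a b : R) : `|Num.max 0 (e - a) - Num.max 0 (e - b)| <= `|a - b|.
Proof.
have h1 := ler_norm (a - b); have h2 := ler_norm (b - a); rewrite distrC in h2.
rewrite ler_norml; rewrite !maxEle.
by case: ifP => /= H1; case: ifP => /= H2; apply/andP; split; lra.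
Qed.

Lemma max0_mono (a b : R) : a <= b -> Num.max 0 a <= Num.max 0 b.
Proof. by move=> ab; rewrite !maxEle; case: ifP; case: ifP => //=; lra. Qed.

Lemma max0_ge0 (a : R) : 0 <= Num.max 0 a.
Proof. by rewrite le_max lexx. Qed.

Lemma ereal_step (a b e : R) (I1 I2 : \bar R) :
  (`|a%:E - I1| <= e%:E)%E -> (`|b%:E - I2| <= e%:E)%E -> a <= b ->
  (I1 <= I2 + (e + e)%:E)%E.
Proof.
case: I1 => [r1||]; case: I2 => [r2||] //=; rewrite ?lee_fin.
- move=> h1 h2 ab.
  have := ler_norm (a - r1); have := ler_norm (r1 - a); rewrite distrC.
  have := ler_norm (b - r2); have := ler_norm (r2 - b); rewrite (distrC r2).
  lra.
all: by rewrite ?leey ?leNye.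
Qed.

Lemma inv_small (p : R) : (forall n : nat, p < (n.+1%:R)^-1) -> p <= 0.
Proof.
move=> H; rewrite leNgt; apply/negP => p0.
set n := Num.trunc (p^-1).
have h1 : p^-1 < n.+1%:R by exact: truncnS_gt.
have := H n; rewrite ltNge => /negP; apply.
rewrite -(invrK p) lef_pV2 ?inE ?invr_gt0 //; [exact: ltW | by rewrite posrE ltr0Sn | by rewrite posrE invr_gt0].
Qed.

End Small.

Section Eucl2.
Variables (R : realType) (d : nat).
Lemma enormZ (c : R) (w : 'rV[R]_d) : enorm (c *: w) = `|c| * enorm w.
Proof.
rewrite /enorm (eq_bigr (fun k => c ^+ 2 * w ord0 k ^+ 2)); last first.
  by move=> k _; rewrite mxE exprMn.
rewrite -mulr_sumr sqrtrM ?sqr_ge0 // sqrtr_sqr //.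
Qed.
End Eucl2.

Unset Implicit Arguments.

Theorem mainTheorem10
  (R : realType) (d : nat) (T alpha M : R)
  (* particle system with N = n.+1 particles: positions / velocities *)
  (x v : forall n : nat, 'I_n.+1 -> R -> 'rV[R]_d)
  (rho0 : probability (Rd R d) R) (u0 : Rd R d -> Rd R d)
  (sigma : nat -> nat)
  (mu : R -> probability (Phase R d) R)
  (rho : R -> {measure set (Rd R d) -> \bar R}) :
  (0 < d)%N -> 0 < T -> 1 <= alpha <= 2 ->
  (* global smooth non-collisional solutions of the particle system *)
  (forall n i, {within `[0, +oo[, continuous (x n i)}) ->
  (forall n i, {within `[0, +oo[, continuous (v n i)}) ->
  (forall n i j (t : R), 0 <= t -> i != j -> x n i t != x n j t) ->
  (forall n i (t : R), 0 < t ->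
     is_derive t 1 (x n i) (v n i t) /\
     is_derive t 1 (v n i)
       ((n.+1%:R)^-1 *: \sum_(j < n.+1 | j != i)
            (enorm (x n i t - x n j t) `^ (- alpha)) *: (v n j t - v n i t))) ->
  (* rho0 compactly supported, u0 in L^infty(rho0; R^d) *)
  (exists K : set 'rV[R]_d, compact K /\ measurable (K : set (Rd R d)) /\
       rho0 (~` K) = 0%E) ->
  measurable_fun setT u0 ->
  (exists C : R, {ae rho0, forall y, enorm (u0 y) <= C}) ->
  (* narrow convergence of the initial empirical data *)
  (forall phi : 'rV[R]_d -> R, bcont setT phi ->
     (fun n => ((n.+1%:R)^-1 * \sum_(i < n.+1) phi (x n i 0))%:E) @ \oo
        --> (\int[rho0]_y (phi y)%:E)%E) ->
  (forall phi : 'rV[R]_d -> R, bcont setT phi -> forall k : 'I_d,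
     (fun n => ((n.+1%:R)^-1 * \sum_(i < n.+1) phi (x n i 0) * v n i 0 ord0 k)%:E)
        @ \oo --> (\int[rho0]_y (phi y * u0 y ord0 k)%:E)%E) ->
  (* uniform support bound: supp mu^N_t in (T+1)B(M) x B(M) *)
  (forall n i (t : R), 0 <= t <= T ->
     enorm (x n i t) < (T + 1) * M /\ enorm (v n i t) < M) ->
  (* the subsequence *)
  {homo sigma : m n / (m < n)%N} ->
  (* mu_t is a measurable family in t (mu = mu_t (x) lambda^1 is meaningful) *)
  (forall A : set (Phase R d), measurable A ->
     measurable_fun `[0, T] (fun t : R => mu t A)) ->
  (* narrow convergence mu^N -> mu on [0,T] x R^d x R^d *)
  (forall g : R * ('rV[R]_d * 'rV[R]_d) -> R,
     bcont [set p | p.1 \in `[0, T]] g ->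
     (fun k => let n := sigma k in
        (\int[lebesgue_measure]_(t in I0T T)
           ((n.+1%:R)^-1 * \sum_(i < n.+1) g (t, (x n i t, v n i t)))%:E)%E)
       @ \oo -->
     (\int[lebesgue_measure]_(t in I0T T)
        \int[mu t]_z (g (t, z))%:E)%E) ->
  (* narrow convergence [mu^N_t (x) mu^N_t] (x) lambda -> [mu_t (x) mu_t] (x) lambda *)
  (forall g : R * (('rV[R]_d * 'rV[R]_d) * ('rV[R]_d * 'rV[R]_d)) -> R,
     bcont [set p | p.1 \in `[0, T]] g ->
     (fun k => let n := sigma k in
        (\int[lebesgue_measure]_(t in I0T T)
           ((n.+1%:R)^-2 * \sum_(i < n.+1) \sum_(j < n.+1)
               g (t, ((x n i t, v n i t), (x n j t, v n j t))))%:E)%E)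
       @ \oo -->
     (\int[lebesgue_measure]_(t in I0T T)
        \int[mu t]_z \int[mu t]_w
           (g (t, (z, w)))%:E)%E) ->
  (* rho_t is the x-marginal of mu_t *)
  (forall (t : R) (A : set (Rd R d)), measurable A -> rho t A = mu t (A `*` setT)) ->
  (* rho^N -> rho in C([0,T]; (M_+(R^d), d_BL)) *)
  (forall t0 : R, 0 <= t0 <= T -> forall e : R, 0 < e -> exists2 delta : R, 0 < delta &
     forall t : R, 0 <= t <= T -> `|t - t0| < delta ->
       dBL_le (fun f => \int[rho t]_y (f y)%:E)%E
              (fun f => \int[rho t0]_y (f y)%:E)%E e) ->
  (forall e : R, 0 < e -> \forall k \near \oo, forall t : R, 0 <= t <= T ->
     let n := sigma k in
     dBL_le (fun f => ((n.+1%:R)^-1 * \sum_(i < n.+1) f (x n i t))%:E)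
            (fun f => \int[rho t]_y (f y)%:E)%E e) ->
  (* E[mu^N_t] -> E[mu_t] on a full-measure set A_E *)
  (exists AE : set R, measurable AE /\ AE `<=` `[0, T] /\
     lebesgue_measure (`[0, T] `\` AE) = 0%E /\
     forall t : R, AE t ->
       (fun k => let n := sigma k in
          ((n.+1%:R)^-1 * \sum_(i < n.+1) enorm (v n i t) ^+ 2)%:E)
         @ \oo --> (\int[mu t]_z (enorm z.2 ^+ 2)%:E)%E) ->
  (* conclusion: local mass preservation *)
  forall (C : set 'rV[R]_d) (t0 t : R),
    measurable (C : set (Rd R d)) -> 0 <= t0 -> t0 <= t -> t <= T ->
    (rho t0 C <=
       rho t (setMsum (closure C)
                [set (t - t0) *: b | b in closure (@eball R d M)]))%E.
Proof.
move=> hd hT halpha xc vc xnd hder hK hu0m hu0b hinit1 hinit2 hsupp hsig hmeas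
  hnarrow hnarrow2 hmarg hcont hunif hAE C t0 t mC t00 t0t tT.
have M0 : 0 < M.
  have := hsupp 0%N ord0 0; rewrite lexx ltW // => /(_ isT) [_ h].
  exact: le_lt_trans (enorm_ge0 _) h.
have rle1 : forall s (A : set (Rd R d)), measurable A -> (rho s A <= 1)%E.
  move=> s A mA; rewrite hmarg //; apply: probability_le1.
  exact: measurableX.
have [C0|C0] := pselect (C !=set0); last first.
  have -> : C = set0 by apply/seteqP; split => [y Cy|//]; exfalso; apply: C0; exists y.
  by rewrite measure0 measure_ge0.
set s := t - t0.
have s0 : 0 <= s by rewrite subr_ge0.
pose ph := phi C M s.
have phc : continuous ph := phi_cont M0 C0.
have oF : forall e : R, open [set y : 'rV[R]_d | ph y < e].
  move=> e; have -> : [set y : 'rV[R]_d | ph y < e] = ph @^-1` [set x | x < e] by [].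
  by move/continuousP: phc; apply; exact: open_lt.
have claim1 : forall eps : R, 0 < eps -> eps <= 1 ->
    (rho t0 C <= rho t [set y : Rd R d | (ph y < eps)%R])%E.
  move=> eps e0 e1.
  pose F := fun y : 'rV[R]_d => Num.max 0 (eps - distS C y).
  pose G := fun y : 'rV[R]_d => Num.max 0 (eps - ph y).
  have dC0 : forall y, 0 <= distS C y by move=> y; exact: distS_ge0.
  have cF : forall y z, `|F y - F z| <= `|y - z|.
    by move=> y z; apply: le_trans (max0_lip _ _ _) (distS_abs y z C0).
  have cG : forall y z, `|G y - G z| <= `|y - z|.
    by move=> y z; apply: le_trans (max0_lip _ _ _) (phi_abs s M0 C0 y z).
  have F0 : forall y, 0 <= F y by move=> y; exact: max0_ge0.
  have G0 : forall y, 0 <= G y by move=> y; exact: max0_ge0.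
  have Fle : forall y, F y <= eps.
    by move=> y; rewrite /F ge_max ltW //=; have := dC0 y; lra.
  have Gle : forall y, G y <= eps.
    by move=> y; rewrite /G ge_max ltW //=; have := phi_ge0 s M0 C0 y; lra.
  have bF : BL1 F.
    split=> [y|y z]; last exact: le_trans (cF y z) (norm_le_enorm _).
    by rewrite ger0_norm //; exact: le_trans (Fle y) e1.
  have bG : BL1 G.
    split=> [y|y z]; last exact: le_trans (cG y z) (norm_le_enorm _).
    by rewrite ger0_norm //; exact: le_trans (Gle y) e1.
  have B0 : @Bset R d M 0.
    rewrite /Bset; apply: subset_closure; rewrite /eball /= /enorm (eq_bigr (fun _ => 0)).
      by rewrite big1 // sqrtr0.
    by move=> k _; rewrite mxE expr0n.
  have hFG : forall n (i : 'I_n.+1), F (x n i t0) <= G (x n i t).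
    move=> n i; apply: max0_mono.
    set w := x n i t - x n i t0.
    have Sw : Sset M s w.
      have [sz|sn0] := eqVneq s 0.
        have tt0 : t = t0 by apply/eqP; rewrite -subr_eq0; apply/eqP; exact: sz.
        exists 0 => //; by rewrite scaler0 /w tt0 subrr.
      have sp : 0 < s by rewrite lt_neqAle eq_sym sn0 s0.
      have tlt : t0 < t by rewrite -subr_gt0.
      exists (s^-1 *: w); last by rewrite scalerA mulfV // scale1r.
      apply: subset_closure; rewrite /eball /= enormZ ger0_norm ?invr_ge0 ?ltW //.
      rewrite -(ltr_pM2l sp) mulrA mulfV ?mul1r //.
      apply: (displacement (xc n i) (fun r r0 => (hder n i r r0).1)) => //.
      move=> r /andP [r1 r2]; apply: (proj2 (hsupp n i r _)).
      by rewrite (le_trans t00 r1) (le_trans r2 tT).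
    have := phi_le C0 (x n i t) Sw.
    rewrite /w opprB addrC subrK => H; rewrite /ph; lra.
  have I12 : (\int[rho t0]_y (F y)%:E <= \int[rho t]_y (G y)%:E)%E.
    apply/lee_addgt0Pr => e ep.
    have e20 : 0 < e / 2 by rewrite divr_gt0.
    case: (hunif _ e20) => N _ HN.
    have hk := HN N (leqnn N); rewrite /= in hk.
    have h1 := hk t0 _ F bF; have h2 := hk t _ G bG.
    rewrite (splitr e); apply: ereal_step (h1 _) (h2 _) _.
    - by rewrite t00 (le_trans t0t tT).
    - by rewrite (le_trans t00 t0t) tT.
    apply: ler_wpM2l; first by rewrite invr_ge0.
    by apply: ler_sum => i _; exact: hFG.
  have mU : measurable [set y : Rd R d | (ph y < eps)%R] by apply: open_meas; exact: oF.
  have contF : continuous F by apply: lip_continuous.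
  have contG : continuous G by apply: lip_continuous.
  have lb : (eps%:E * rho t0 C <= \int[rho t0]_y (F y)%:E)%E.
    apply: (int_lb (rho t0) mC contF F0 _ (ltW e0)).
    move=> y Cy; rewrite /F le_max; apply/orP; right.
    have := distS_le y Cy; rewrite subrr normr0 => h.
    by rewrite -[X in X <= _]addr0 lerD2l oppr_ge0.
  have ub : (\int[rho t]_y (G y)%:E <= eps%:E * rho t [set y : Rd R d | (ph y < eps)%R])%E.
    apply: (int_ub (rho t) mU contG G0 _ e0) => y; rewrite /indic.
    case: (boolP (y \in [set y : Rd R d | (ph y < eps)%R])) => hy.
      by rewrite mulr1.
    rewrite mulr0 /G ge_max lexx /=.
    move: hy; rewrite notin_setE /= => /negP; rewrite -leNgt => h.
    by rewrite subr_le0.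
  have := le_trans lb (le_trans I12 ub).
  by rewrite lee_pmul2l // lte_fin.

pose Fs := fun n : nat => [set y : Rd R d | (ph y < (n.+1%:R)^-1)%R].
have mF : forall n, measurable (Fs n) by move=> n; apply: open_meas; exact: oF.
have DE : setMsum (closure C) [set (t - t0) *: b | b in closure (@eball R d M)]
          = \bigcap_n Fs n.
  apply/seteqP; split => y.
    move=> /(D_phi C0) py n _; rewrite /Fs /=.
    by apply: le_lt_trans py _; rewrite invr_gt0.
  move=> Hy; apply: (phi_zero M0 C0); apply: inv_small => n; exact: Hy.
have noninc : nonincreasing_seq Fs.
  move=> m n mn; apply/subsetPset => y; rewrite /Fs /= => hy.
  apply: lt_le_trans hy _; rewrite lef_pV2 ?posrE ?ltr0Sn // ler_nat.
  by rewrite ltnS.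
have fin0 : (rho t (Fs 0%N) < +oo)%E.
  by apply: le_lt_trans (rle1 _ _ (mF 0%N)) _; rewrite ltry.
have cv := nonincreasing_cvg_mu fin0 mF (bigcapT_measurable mF) noninc.
rewrite DE -(cvg_lim _ cv) //.
apply: lime_ge; first exact: cvgP cv.
apply: nearW => n /=; apply: claim1; first by rewrite invr_gt0.
by rewrite invf_le1 // ler1n.
Qed.
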